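(* Let $\varepsilon>0$ and $k\ge1$. There exist datasets $D_1,D_2,D_3$ with $(D_1,D_2)$ and $(D_2,D_3)$ neighboring pairs, and a sequence $Q$ of $k$ counting queries, such that running VanillaSVT$(\cdot,Q,\theta=0,\lambda,t=1)$ (described below), the output $E$ with $o_1=\dots=o_{k-1}=\bot$ and $o_k=1$ satisfies $\frac{p_{D_1}(E)}{p_{D_3}(E)}=e^{k/\lambda}$, where $p_D(E)$ is the output probability density at $E$ on input $D$. Consequently VanillaSVT with $t=1$ does not satisfy $\varepsilon$-differential privacy whenever $\lambda<\frac{k}{2\varepsilon}$.
   Context: $\mathrm{Lap}(\lambda)$ is the Laplace distribution with density $\frac{1}{2\lambda}e^{-|y|/\lambda}$. A dataset is a finite multiset of tuples; two datasets are neighboring if one is obtained by inserting one tuple into the other. A counting query counts the tuples satisfying a predicate. VanillaSVT$(D,Q=(q_1,\dots,q_k),\theta,\lambda,t)$: set $cnt=0$; draw $\hat\theta=\theta+\mathrm{Lap}(\lambda)$ once; for $i=1,\dots,k$: draw $\hat q_i(D)=q_i(D)+\mathrm{Lap}(t\lambda)$ (independent noises); if $\hat q_i(D)>\hat\theta$, output $o_i=\hat q_i(D)$, increase $cnt$ by one and stop if $cnt\ge t$; otherwise output $o_i=\bot$. An algorithm is $\varepsilon$-differentially private if for all neighboring $D,D'$ the output densities satisfy $p_D(O)\le e^{\varepsilon}p_{D'}(O)$ for all outputs $O$. *)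

(* Defs.v *)
From Stdlib Require Import Reals List Permutation ClassicalEpsilon.
Import ListNotations.
Open Scope R_scope.

Definition lap_pdf (b y : R) : R := / (2 * b) * exp (- Rabs y / b).

Definition lap_cdf (b y : R) : R :=
  if Rlt_dec y 0 then / 2 * exp (y / b) else 1 - / 2 * exp (- y / b).

Definition is_improper_integral (f : R -> R) (l : R) : Prop :=
  forall eps, 0 < eps -> exists M, forall a b, a <= - M -> M <= b ->
    exists pr : Riemann_integrable f a b, Rabs (RiemannInt pr - l) < eps.

(** The value of the integral (chosen classically; meaningful when it exists). *)
Definition improper_integral (f : R -> R) : R :=
  epsilon (inhabits 0) (fun l => is_improper_integral f l).

(** A dataset over tuple type [T] is a finite multiset, represented by a list
    up to permutation. *)
Definition neighboring {T : Type} (D D' : list T) : Prop :=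
  (exists x, Permutation D' (x :: D)) \/ (exists x, Permutation D (x :: D')).

Definition count_query {T : Type} (q : T -> bool) (D : list T) : R :=
  INR (length (filter q D)).

(** Outputs: a list of [None] (= ⊥) / [Some v] (= o_i = v).  Validity of an output
    sequence for query list [Q] and cutoff [t], with [cnt] positives so far:
    the algorithm runs over all queries unless it stops right after the t-th positive. *)
Fixpoint svt_valid {T : Type} (Q : list (T -> bool)) (O : list (option R))
    (t cnt : nat) : bool :=
  match Q, O with
  | [], [] => true
  | _ :: _, [] => false
  | [], _ :: _ => false
  | _ :: Q', None :: O' => svt_valid Q' O' t cnt
  | _ :: Q', Some _ :: O' =>
      if Nat.leb t (S cnt) then
        match O' with [] => true | _ => false end
      else svt_valid Q' O' t (S cnt)
  end.

(** Conditional density of the output given noisy threshold [z]; query noise Lap(b).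
    ⊥ at query q: P(q(D) + Lap(b) <= z);  value v at query q: density of
    q(D)+Lap(b) at v, provided v > z. *)
Fixpoint svt_lik {T : Type} (b z : R) (Q : list (T -> bool)) (D : list T)
    (O : list (option R)) : R :=
  match Q, O with
  | _, [] => 1
  | [], _ :: _ => 0
  | q :: Q', None :: O' => lap_cdf b (z - count_query q D) * svt_lik b z Q' D O'
  | q :: Q', Some v :: O' =>
      (if Rlt_dec z v then lap_pdf b (v - count_query q D) else 0)
      * svt_lik b z Q' D O'
  end.

(** Output density p_D(O) of VanillaSVT(D, Q, theta, lambda, t):
    the noisy threshold z = theta + Lap(lambda) is integrated out;
    query noises are Lap(t * lambda). *)
Definition svt_density {T : Type} (D : list T) (Q : list (T -> bool))
    (theta lam : R) (t : nat) (O : list (option R)) : R :=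
  if svt_valid Q O t 0 then
    improper_integral (fun z => lap_pdf lam (z - theta) * svt_lik (INR t * lam) z Q D O)
  else 0.

Definition eps_DP {T : Type} (p : list T -> list (option R) -> R) (eps : R) : Prop :=
  forall D D', neighboring D D' -> forall O, p D O <= exp eps * p D' O.

Definition svt_E (k : nat) : list (option R) := repeat None (k - 1) ++ [Some 1].

(* Main.v *)
Require Import Defs.
From Stdlib Require Import Reals List Lra Lia ClassicalEpsilon Permutation.
From Coquelicot Require Import Coquelicot.
Import ListNotations.
Open Scope R_scope.

Definition h0 (lam : R) (n : nat) (z : R) : R := lap_pdf lam z * exp (z / lam) ^ n.

Lemma h0_cont lam n z : 0 < lam -> continuous (h0 lam n) z.
Proof.
intros Hl. apply continuity_pt_filterlim. unfold h0, lap_pdf.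
apply (continuity_pt_mult (fun z => / (2 * lam) * exp (- Rabs z / lam)) (fun z => exp (z/lam) ^ n)).
- apply (continuity_pt_mult (fun _ => / (2*lam)) (fun z => exp (- Rabs z / lam))).
  + apply continuity_pt_const. intros a b; auto.
  + apply (continuity_pt_comp (fun z => - Rabs z / lam) exp).
    * apply (continuity_pt_mult (fun z => - Rabs z) (fun _ => / lam)).
      -- apply (continuity_pt_opp Rabs). apply Rcontinuity_abs.
      -- apply continuity_pt_const. intros a b; auto.
    * apply derivable_continuous_pt. apply derivable_pt_exp.
- apply continuity_pt_filterlim. change (continuous (fun z => exp (z/lam) ^ n) z). apply (ex_derive_continuous (V:=R_NormedModule)). auto_derive. auto.
Qed.

Lemma exp_pow x n : exp x ^ n = exp (INR n * x).
Proof.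
induction n. simpl. rewrite Rmult_0_l, exp_0; auto.
rewrite S_INR. change (exp x ^ S n) with (exp x * exp x ^ n).
rewrite IHn, <- exp_plus. f_equal; ring.
Qed.

Definition G (lam : R) (n : nat) (z : R) := / (2 * (INR n + 1)) * exp ((INR n + 1) * z / lam).

Lemma RInt_h0_neg lam n a : 0 < lam -> a <= 0 -> RInt (h0 lam n) a 0 = G lam n 0 - G lam n a.
Proof.
intros Hl Ha. apply is_RInt_unique.
apply (is_RInt_derive (G lam n) (h0 lam n)).
- intros x Hx. rewrite Rmin_left in Hx by lra. rewrite Rmax_right in Hx by lra.
  unfold G. auto_derive. auto.
  unfold h0, lap_pdf. rewrite Rabs_left1 by lra. rewrite exp_pow.
  rewrite (Rmult_assoc (/ (2 * lam)) (exp _)), <- exp_plus.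
  replace (- - x / lam + INR n * (x / lam)) with ((INR n + 1) * x * / lam) by (field; lra).
  assert (0 <= INR n) by apply pos_INR. field. lra.
- intros; apply h0_cont; auto.
Qed.

Lemma exR_h0 lam n a b : 0 < lam -> ex_RInt (h0 lam n) a b.
Proof. intros; apply (ex_RInt_continuous (V:=R_CompleteNormedModule)); intros; apply h0_cont; auto. Qed.

Lemma exp_small lam a M : 0 < lam -> 0 < M -> a <= - M -> exp (a / lam) < lam / M.
Proof.
intros Hl HM Ha.
assert (H1 : 1 + (- a / lam) < exp (- a / lam)).
{ apply exp_ineq1. intro H. assert (- a / lam * lam = 0) by (rewrite H; ring).
  field_simplify in H0; lra. }
assert (Hp : exp (a / lam) * exp (- a / lam) = 1).
{ rewrite <- exp_plus. replace (a / lam + - a / lam) with 0 by (field; lra). apply exp_0. }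
assert (M / lam <= - a / lam). { unfold Rdiv. apply Rmult_le_compat_r. left; apply Rinv_0_lt_compat; lra. lra. }
assert (0 < exp (a / lam)) by apply exp_pos.
apply (Rmult_lt_reg_r (M / lam)). apply Rdiv_lt_0_compat; lra.
replace (lam / M * (M / lam)) with 1 by (field; lra).
rewrite <- Hp. apply Rmult_lt_compat_l; lra.
Qed.

Lemma improper lam c n (f : R -> R) : 0 < lam -> 0 < c ->
  (forall z, z < 1 -> f z = c * h0 lam n z) -> (forall z, 1 < z -> f z = 0) ->
  is_improper_integral f (c * (RInt (h0 lam n) 0 1 + G lam n 0)).
Proof.
intros Hl Hc Hf1 Hf2 eps Heps.
exists (1 + c * lam / eps). intros a b Ha Hb.
assert (Hcl : 0 < c * lam / eps) by (apply Rdiv_lt_0_compat; [apply Rmult_lt_0_compat|]; lra).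
assert (ex1 : ex_RInt f a 1).
{ apply (ex_RInt_ext (fun z => c * h0 lam n z)).
  - intros x Hx. rewrite Rmin_left in Hx by lra. rewrite Rmax_right in Hx by lra.
    rewrite Hf1; lra.
  - apply (ex_RInt_scal (h0 lam n) a 1 c). apply exR_h0; auto. }
assert (ex2 : ex_RInt f 1 b).
{ apply (ex_RInt_ext (fun _ => 0)).
  - intros x Hx. rewrite Rmin_left in Hx by lra. rewrite Rmax_right in Hx by lra.
    rewrite Hf2; lra.
  - apply ex_RInt_const. }
exists (ex_RInt_Reals_0 _ _ _ (ex_RInt_Chasles f a 1 b ex1 ex2)).
rewrite <- RInt_Reals. rewrite <- (RInt_Chasles f a 1 b ex1 ex2).
assert (E2 : RInt f 1 b = 0).
{ rewrite (RInt_ext f (fun _ => 0)). rewrite RInt_const. apply Rmult_0_r.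
  intros x Hx. rewrite Rmin_left in Hx by lra. rewrite Rmax_right in Hx by lra.
  rewrite Hf2; lra. }
assert (E1 : RInt f a 1 = c * RInt (h0 lam n) a 1).
{ rewrite (RInt_ext f (fun z => scal c (h0 lam n z))).
  rewrite (RInt_scal (V:=R_CompleteNormedModule)). reflexivity. apply exR_h0; auto.
  intros x Hx. rewrite Rmin_left in Hx by lra. rewrite Rmax_right in Hx by lra.
  rewrite Hf1; [reflexivity|lra]. }
rewrite E1, E2.
rewrite <- (RInt_Chasles (h0 lam n) a 0 1) by (apply exR_h0; auto).
rewrite RInt_h0_neg by lra.
match goal with |- context [plus ?x ?y] => replace (plus x y) with (x+y) by reflexivity end.
assert (exp (a / lam) < lam / (1 + c * lam / eps)) by (apply exp_small; lra).
assert (Hg : 0 < G lam n a <= exp (a / lam) / 2).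
{ unfold G. assert (0 <= INR n) by apply pos_INR.
  split. apply Rmult_lt_0_compat. apply Rinv_0_lt_compat; lra. apply exp_pos.
  assert (exp ((INR n + 1) * a / lam) <= exp (a / lam)).
  { destruct (Req_dec ((INR n + 1) * a / lam) (a / lam)) as [E|E]; [rewrite E; lra|].
    left; apply exp_increasing. unfold Rdiv.
    apply Rmult_lt_compat_r. apply Rinv_0_lt_compat; lra.
    assert (a * INR n <= 0) by (apply Rmult_le_0_r; lra).
    assert ((INR n + 1) * a <> a) by (intro Ee; apply E; rewrite Ee; auto). nra. }
  assert (/ (2 * (INR n + 1)) <= / 2).
  { apply Rinv_le_contravar; lra. }
  assert (0 < exp ((INR n + 1) * a / lam)) by apply exp_pos.
  assert (0 < / (2 * (INR n + 1))) by (apply Rinv_0_lt_compat; lra).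
  unfold Rdiv at 2. rewrite (Rmult_comm (exp (a / lam))).
  apply Rmult_le_compat; lra. }
rewrite Rplus_0_r.
change (plus (G lam n 0 - G lam n a) (RInt (h0 lam n) 0 1)) with (G lam n 0 - G lam n a + RInt (h0 lam n) 0 1).
replace (c * (G lam n 0 - G lam n a + RInt (h0 lam n) 0 1) - c * (RInt (h0 lam n) 0 1 + G lam n 0))
  with (- (c * G lam n a)) by ring.
replace (c * (G lam n 0 - G lam n a + RInt (h0 lam n) 0 1) - c * (RInt (h0 lam n) 0 1 + G lam n 0))
  with (- (c * G lam n a)) by ring.
rewrite Rabs_Ropp, Rabs_pos_eq by nra.
assert (Hm : lam / (1 + c * lam / eps) * c < eps).
{ assert (0 < c * lam) by nra. apply (Rmult_lt_reg_r (1 + c * lam / eps)). lra.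
  replace (lam / (1 + c * lam / eps) * c * (1 + c * lam / eps)) with (c * lam) by (field; lra).
  replace (eps * (1 + c * lam / eps)) with (eps + c * lam) by (field; lra). lra. }
nra.
Qed.

Lemma improper_unique f l1 l2 : is_improper_integral f l1 -> is_improper_integral f l2 -> l1 = l2.
Proof.
intros H1 H2. destruct (Req_dec l1 l2) as [|Hne]; auto. exfalso.
assert (He : 0 < Rabs (l1 - l2) / 2) by (apply Rdiv_lt_0_compat; [apply Rabs_pos_lt; lra|lra]).
destruct (H1 _ He) as [M1 HM1]. destruct (H2 _ He) as [M2 HM2].
set (M := Rabs M1 + Rabs M2).
assert (Rabs M1 >= M1 /\ Rabs M2 >= M2) by (split; apply Rle_ge, RRle_abs).
assert (0 <= Rabs M1 /\ 0 <= Rabs M2) by (split; apply Rabs_pos).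
destruct (HM1 (- M) M) as [p1 E1]; [unfold M; lra|unfold M; lra|].
destruct (HM2 (- M) M) as [p2 E2]; [unfold M; lra|unfold M; lra|].
rewrite (RiemannInt_P5 p2 p1) in E2.
assert (Rabs (l1 - l2) <= Rabs (RiemannInt p1 - l2) + Rabs (RiemannInt p1 - l1)).
{ replace (l1 - l2) with ((RiemannInt p1 - l2) - (RiemannInt p1 - l1)) by ring.
  eapply Rle_trans. apply Rabs_triang. rewrite Rabs_Ropp. lra. }
lra.
Qed.

Lemma improper_val f l : is_improper_integral f l -> improper_integral f = l.
Proof.
intros H. unfold improper_integral.
apply (improper_unique f). apply epsilon_spec. exists l; auto. auto.
Qed.

Definition q1 (x : nat) : bool := orb (Nat.eqb x 2) (Nat.eqb x 0).
Definition q2 (x : nat) : bool := Nat.eqb x 1.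
Definition QQ (n : nat) : list (nat -> bool) := repeat q1 n ++ [q2].

Lemma valid_QQ n : svt_valid (QQ n) (repeat None n ++ [Some 1]) 1 0 = true.
Proof. unfold QQ; induction n; simpl; auto. Qed.

Lemma lik_QQ b z n D : svt_lik b z (QQ n) D (repeat None n ++ [Some 1]) =
  lap_cdf b (z - count_query q1 D) ^ n *
  ((if Rlt_dec z 1 then lap_pdf b (1 - count_query q2 D) else 0) * 1).
Proof.
unfold QQ; induction n; simpl. ring. rewrite IHn. ring.
Qed.

Definition K lam n := RInt (h0 lam n) 0 1 + G lam n 0.

Lemma K_pos lam n : 0 < lam -> 0 < K lam n.
Proof.
intros Hl. unfold K.
assert (0 <= RInt (h0 lam n) 0 1).
{ apply RInt_ge_0. lra. apply exR_h0; auto. intros x _. unfold h0, lap_pdf.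
  apply Rmult_le_pos. apply Rmult_le_pos. left; apply Rinv_0_lt_compat; lra.
  left; apply exp_pos. apply pow_le. left; apply exp_pos. }
assert (0 < G lam n 0). { unfold G. assert (0 <= INR n) by apply pos_INR.
  apply Rmult_lt_0_compat. apply Rinv_0_lt_compat; lra. apply exp_pos. }
lra.
Qed.

Definition cD lam n c1 c2 := (/ 2 * exp (- c1 / lam)) ^ n * lap_pdf lam (1 - c2).

Lemma density_QQ lam n (D : list nat) : 0 < lam -> 1 <= count_query q1 D ->
  svt_density D (QQ n) 0 lam 1 (repeat None n ++ [Some 1]) =
  cD lam n (count_query q1 D) (count_query q2 D) * K lam n.
Proof.
intros Hl Hc. unfold svt_density. rewrite valid_QQ.
apply improper_val. apply improper; auto.
- unfold cD, lap_pdf. apply Rmult_lt_0_compat. apply pow_lt.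
  apply Rmult_lt_0_compat. lra. apply exp_pos.
  apply Rmult_lt_0_compat. apply Rinv_0_lt_compat; lra. apply exp_pos.
- intros z Hz. rewrite lik_QQ. destruct (Rlt_dec z 1); [|lra].
  replace (INR 1 * lam) with lam by (simpl; ring).
  unfold lap_cdf. destruct (Rlt_dec (z - count_query q1 D) 0); [|lra].
  unfold cD, h0. rewrite Rminus_0_r.
  replace (/ 2 * exp ((z - count_query q1 D) / lam)) with
    ((/ 2 * exp (- count_query q1 D / lam)) * exp (z / lam)).
  rewrite Rpow_mult_distr. ring.
  rewrite Rmult_assoc, <- exp_plus. f_equal. f_equal. field. lra.
- intros z Hz. rewrite lik_QQ. destruct (Rlt_dec z 1); [lra|]. ring.
Qed.

Lemma cD_ratio lam n : 0 < lam ->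
  cD lam n 1 1 = exp ((INR n + 1) / lam) * cD lam n 2 0.
Proof.
intros Hl. unfold cD, lap_pdf.
rewrite !Rpow_mult_distr, !exp_pow.
assert (E : exp (INR n * (- (1) / lam)) * exp (- Rabs (1 - 1) / lam) =
   exp ((INR n + 1) / lam) * (exp (INR n * (- (2) / lam)) * exp (- Rabs (1 - 0) / lam))).
{ replace (1 - 1) with 0 by ring. replace (1 - 0) with 1 by ring.
  rewrite Rabs_R0, Rabs_R1, <- !exp_plus. f_equal. field. lra. }
transitivity ((/ 2) ^ n * / (2 * lam) * (exp (INR n * (- (1) / lam)) * exp (- Rabs (1 - 1) / lam))).
ring. rewrite E. ring.
Qed.

Theorem mainTheorem10 (eps : R) (k : nat) (lam : R) :
  0 < eps -> (1 <= k)%nat -> 0 < lam ->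
  (exists (D1 D2 D3 : list nat) (Q : list (nat -> bool)),
      neighboring D1 D2 /\ neighboring D2 D3 /\ length Q = k /\
      0 < svt_density D3 Q 0 lam 1 (svt_E k) /\
      svt_density D1 Q 0 lam 1 (svt_E k) / svt_density D3 Q 0 lam 1 (svt_E k)
        = exp (INR k / lam))
  /\
  (lam < INR k / (2 * eps) ->
     ~ (forall Q : list (nat -> bool), length Q = k ->
          eps_DP (fun D O => svt_density D Q 0 lam 1 O) eps)).
Proof.
intros He Hk Hl.
destruct k as [|n]; [lia|].
assert (HE : svt_E (S n) = repeat None n ++ [Some 1]).
{ unfold svt_E. f_equal. f_equal. lia. }
assert (HL : length (QQ n) = S n).
{ unfold QQ. rewrite length_app, repeat_length. simpl. lia. }
assert (N12 : neighboring [1%nat; 0%nat] [0%nat]).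
{ right. exists 1%nat. apply Permutation_refl. }
assert (N23 : neighboring [0%nat] [2%nat; 0%nat]).
{ left. exists 2%nat. apply Permutation_refl. }
assert (P1 : svt_density [1%nat; 0%nat] (QQ n) 0 lam 1 (svt_E (S n)) = cD lam n 1 1 * K lam n).
{ rewrite HE, density_QQ; auto; unfold count_query; simpl; lra. }
assert (P3 : svt_density [2%nat; 0%nat] (QQ n) 0 lam 1 (svt_E (S n)) = cD lam n 2 0 * K lam n).
{ rewrite HE, density_QQ; auto; unfold count_query; simpl; lra. }
assert (Kp := K_pos lam n Hl).
assert (Cp : 0 < cD lam n 2 0).
{ unfold cD, lap_pdf. apply Rmult_lt_0_compat. apply pow_lt.
  apply Rmult_lt_0_compat. lra. apply exp_pos.
  apply Rmult_lt_0_compat. apply Rinv_0_lt_compat; lra. apply exp_pos. }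
assert (Hr : exp (INR (S n) / lam) = exp ((INR n + 1) / lam)) by (rewrite S_INR; auto).
assert (P3p : 0 < cD lam n 2 0 * K lam n) by (apply Rmult_lt_0_compat; auto).
split.
- exists [1%nat; 0%nat], [0%nat], [2%nat; 0%nat], (QQ n).
  repeat split; auto. rewrite P3; auto.
  rewrite P1, P3, cD_ratio, Hr by auto. field. lra.
- intros Hlt HDP.
  specialize (HDP (QQ n) HL).
  pose proof (HDP _ _ N12 (svt_E (S n))) as A1.
  pose proof (HDP _ _ N23 (svt_E (S n))) as A2.
  simpl in A1, A2. rewrite P1 in A1. rewrite P3 in A2.
  rewrite cD_ratio in A1 by auto. rewrite <- Hr in A1.
  assert (Hexp : exp (INR (S n) / lam) <= exp (eps + eps)).
  { rewrite exp_plus.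
    assert (0 < exp eps) by apply exp_pos.
    apply (Rmult_le_reg_r (cD lam n 2 0 * K lam n)); auto. nra. }
  assert (2 * eps < INR (S n) / lam).
  { apply (Rmult_lt_reg_r lam); auto. replace (INR (S n) / lam * lam) with (INR (S n)) by (field; lra).
    assert (H2 : lam * (2 * eps) < INR (S n) / (2 * eps) * (2 * eps)) by (apply Rmult_lt_compat_r; lra).
    replace (INR (S n) / (2 * eps) * (2 * eps)) with (INR (S n)) in H2 by (field; lra). lra. }
  assert (exp (eps + eps) < exp (INR (S n) / lam)) by (apply exp_increasing; lra).
  lra.
Qed.
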